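(* Let $G_a$ and $G_b$ be graphs on a vertex set $V$ with $|V|=n$, let $h\le n-2$, and let $\mathbf w_a=f_h(G_a)$, $\mathbf w_b=f_h(G_b)$. If $\delta_{a,i}>\delta_{a,i+1}+2$ for all $i\in[h]$, then $\mathbf w_a=\mathbf w_a^U$ for every set $U\subseteq V$ of two vertices containing no entry of $\mathbf w_a$. Similarly, if $\delta_{b,i}>\delta_{b,i+1}+2$ for all $i\in[h]$, then $\mathbf w_b=\mathbf w_b^U$ for every two-vertex set $U\subseteq V$ containing no entry of $\mathbf w_b$.
   Context: For a graph $G$, $\delta_G=(\delta_{G,1},\dots,\delta_{G,n})$ is its degree sequence in decreasing order, with $\delta_{a,i}=\delta_{G_a,i}$, $\delta_{b,i}=\delta_{G_b,i}$. $f_h(G)$ is the vector $(w_1,\dots,w_h)$ of $h$ distinct vertices with $\deg_G(w_i)=\delta_{G,i}$ (the $h$ highest-degree vertices sorted by decreasing degree, ties broken arbitrarily). For a two-vertex set $U\subseteq V$, $\mathbf w_a^U=f_h(G_a[V\setminus U])$ and $\mathbf w_b^U=f_h(G_b[V\setminus U])$, where $G[W]$ denotes the induced subgraph on $W$. *)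

(* Defs.v *)
From mathcomp Require Import all_boot.
Set Implicit Arguments. Unset Strict Implicit. Unset Printing Implicit Defensive.

(* A (simple) graph on the finite vertex set T is a symmetric irreflexive
   relation e.  Induced subgraphs G[W] are represented by the pair (e, W)
   with W : {set T}. *)
Definition simple_graph (T : finType) (e : rel T) : Prop :=
  symmetric e /\ irreflexive e.

Definition deg (T : finType) (e : rel T) (W : {set T}) (v : T) : nat :=
  #|[set u in W | e v u]|.

(* degree sequence of G[W], in decreasing (nonincreasing) order;
   entry i (0-indexed) is delta_{i+1} in the paper's 1-indexed notation *)
Definition degseq (T : finType) (e : rel T) (W : {set T}) : seq nat :=
  sort geq [seq deg e W v | v <- enum W].

(* w is a legitimate value of f_h(G[W]): h distinct vertices of W with
   deg(w_i) = delta_i (ties broken arbitrarily, so any such w qualifies) *)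
Definition is_fh (T : finType) (e : rel T) (W : {set T}) (h : nat)
    (w : h.-tuple T) : Prop :=
  [/\ uniq w, {subset w <= W} &
      forall i : 'I_h, deg e W (tnth w i) = nth 0 (degseq e W) i].

(* Main.v *)
Require Import Defs.
From mathcomp Require Import all_boot.
From mathcomp Require Import zify.

Set Implicit Arguments. Unset Strict Implicit. Unset Printing Implicit Defensive.

Lemma geq_tr : transitive (T:=nat) geq.
Proof. by move=> a b c H1 H2; apply: leq_trans H2 H1. Qed.

Lemma geq_anti : antisymmetric (T:=nat) geq.
Proof. by move=> a b H; apply: anti_leq; rewrite andbC. Qed.

Lemma geq_tot : total (T:=nat) geq.
Proof. by move=> a b; apply: leq_total. Qed.

Lemma degseq_sorted (T : finType) (e : rel T) W : sorted geq (degseq e W).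
Proof. exact: sort_sorted geq_tot _. Qed.

Lemma permW (T : finType) (e : rel T) (W : {set T}) (w : seq T) :
  uniq w -> {subset w <= W} ->
  perm_eq (degseq e W)
    (map (deg e W) w ++ map (deg e W) [seq y <- enum W | predC (mem w) y]).
Proof.
move=> uw sw; rewrite /degseq (perm_sort _ _) -map_cat; apply: perm_map.
have PF : perm_eq ([seq x <- enum W | mem w x] ++ [seq x <- enum W | predC (mem w) x]) (enum W).
  by rewrite perm_filterC.
rewrite perm_sym; apply: (perm_trans _ PF).
rewrite perm_cat2r; apply: uniq_perm => //; first by rewrite filter_uniq ?enum_uniq.
move=> x; rewrite mem_filter mem_enum /=; case xw: (x \in w) => //=.
by rewrite sw.
Qed.

Lemma nth_degseq (T : finType) (e : rel T) (W : {set T}) (w : seq T) (x0 : T) :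
  uniq w -> {subset w <= W} ->
  (forall i j, i < j < size w -> deg e W (nth x0 w j) < deg e W (nth x0 w i)) ->
  (forall y, y \in W -> y \notin w -> forall i, i < size w ->
     deg e W y < deg e W (nth x0 w i)) ->
  forall i, i < size w -> nth 0 (degseq e W) i = deg e W (nth x0 w i).
Proof.
move=> uw sw Hst Hot.
set d := deg e W.
have Hs : degseq e W = map d w ++ sort geq [seq d y | y <- [seq y <- enum W | predC (mem w) y]].
  apply: (sorted_eq geq_tr geq_anti); first exact: degseq_sorted.
    rewrite sorted_pairwise; last exact: geq_tr.
    rewrite pairwise_cat; apply/and3P; split.
    - apply/allrelP => a b /mapP [x xw ->].
      rewrite mem_sort => /mapP [y]; rewrite mem_filter mem_enum /= => /andP [yw yW] ->.
      have [i ilt <-] := nthP x0 xw.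
      by apply: ltnW; apply: Hot.
    - apply/(pairwiseP 0) => i j; rewrite !inE size_map => ilt jlt ij.
      by rewrite !(nth_map x0) //; apply: ltnW; apply: Hst; rewrite ij.
    - by rewrite -sorted_pairwise ?sort_sorted //; [apply: geq_tot| apply: geq_tr].
  apply: (perm_trans (permW e uw sw)); rewrite perm_cat2l perm_sym.
  by rewrite (perm_sort _ _).
by move=> i ilt; rewrite Hs nth_cat size_map ilt (nth_map x0).
Qed.

Lemma mainL (T : finType) (e : rel T) (h : nat) (w : h.-tuple T) :
  h < #|T| -> is_fh e [set: T] w ->
  (forall i, i < h ->
      nth 0 (degseq e [set: T]) i > nth 0 (degseq e [set: T]) i.+1 + 2) ->
   forall (U : {set T}), #|U| = 2 -> (forall x, x \in w -> x \notin U) ->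
   forall wU : h.-tuple T, is_fh e (~: U) wU -> wU = w.
Proof.
move=> hlt [uw sw dw] gap U cU nU wU [uU sU dU].
case: (posnP h) => [h0|hpos].
  by apply: eq_from_tnth => i; have := ltn_ord i; rewrite {2}h0.
set x0 := tnth w (Ordinal hpos).
set s := degseq e [set: T].
set D := deg e [set: T].
set D' := deg e (~: U).
have size_s : size s = #|T| by rewrite /s /degseq size_sort size_map -cardE cardsT.
have mono : forall j k, j <= k -> k < #|T| -> nth 0 s k <= nth 0 s j.
  move=> j k jk klt.
  apply: (sorted_leq_nth geq_tr (fun x => leqnn x) 0 (degseq_sorted e _)) => //;
    rewrite inE size_s //; exact: leq_ltn_trans jk klt.
have Dw : forall i, i < h -> D (nth x0 w i) = nth 0 s i.
  by move=> i ilt; have := dw (Ordinal ilt); rewrite (tnth_nth x0).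
have take_s : take h s = map D w.
  apply: (@eq_from_nth _ 0); first by rewrite size_take size_map size_tuple size_s hlt.
  move=> i; rewrite size_take size_s hlt => ilt.
  by rewrite nth_take // (nth_map x0) ?size_tuple // Dw.
have other : forall y, y \notin w -> D y <= nth 0 s h.
  move=> y yw.
  have P := permW e uw (fun x _ => in_setT x).
  rewrite -/s -(cat_take_drop h s) take_s perm_cat2l in P.
  have : D y \in drop h s.
    by rewrite (perm_mem P); apply: map_f; rewrite mem_filter mem_enum in_setT /= yw.
  case/(nthP 0) => k; rewrite size_drop size_s nth_drop => klt <-.
  apply: mono; first exact: leq_addr.
  by rewrite -ltn_subRL.
have degU : forall v, D' v <= D v /\ D v <= D' v + 2.
  move=> v; split.
    by apply: subset_leq_card; apply/subsetP => u; rewrite !inE => /andP [_ ->].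
  rewrite -cU; apply: leq_trans (leq_card_setU _ _).
  apply: subset_leq_card; apply/subsetP => u; rewrite !inE /=.
  by case: (u \in U) => //= ->.
have wsub : {subset w <= ~: U} by move=> x xw; rewrite inE nU.
have Hst : forall i j, i < j < size w -> D' (nth x0 w j) < D' (nth x0 w i).
  move=> i j; rewrite size_tuple => /andP [ij jh].
  have ih : i < h by exact: ltn_trans ij jh.
  have := gap i ih; have := Dw i ih; have := Dw j jh.
  have := mono i.+1 j ij (ltn_trans jh hlt).
  have [a1 a2] := degU (nth x0 w i); have [b1 b2] := degU (nth x0 w j).
  move=> H1 H2 H3 H4; rewrite -/s in H4; clearbody x0 s D D'; lia.
have Hot : forall y, y \in ~: U -> y \notin w -> forall i, i < size w ->
     D' y < D' (nth x0 w i).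
  move=> y _ yw i; rewrite size_tuple => ih.
  have := gap i ih; have := Dw i ih; have := other y yw.
  have := mono i.+1 h ih hlt.
  have [a1 a2] := degU (nth x0 w i); have [b1 b2] := degU y.
  move=> H1 H2 H3 H4; rewrite -/s in H4; clearbody x0 s D D'; lia.
have ND := nth_degseq uw wsub Hst Hot.
apply: eq_from_tnth => i.
have ilt := ltn_ord i.
have Hy : D' (tnth wU i) = D' (nth x0 w i).
  by rewrite /D' dU ND ?size_tuple.
rewrite (tnth_nth x0 w).
case yw: (tnth wU i \in w); last first.
  by have := Hot _ (sU _ (mem_tnth i wU)) (negbT yw) i; rewrite size_tuple Hy ltnn => /(_ ilt).
have jlt : index (tnth wU i) w < h by have := index_mem (tnth wU i) w; rewrite size_tuple yw.
have := nth_index x0 yw; set j := index _ _ => Ej.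
rewrite -Ej in Hy *.
case: (ltngtP i j) => [ij|ji|-> //].
  by have := Hst i j; rewrite size_tuple ij jlt Hy ltnn => /(_ isT).
by have := Hst j i; rewrite size_tuple ji ilt Hy ltnn => /(_ isT).
Qed.

Theorem lemma4p13 (T : finType) (n : nat) (ea eb : rel T)
    (h : nat) (wa wb : h.-tuple T) :
  #|T| = n -> simple_graph ea -> simple_graph eb -> h <= n - 2 ->
  is_fh ea [set: T] wa -> is_fh eb [set: T] wb ->
  ((forall i, i < h ->
      nth 0 (degseq ea [set: T]) i > nth 0 (degseq ea [set: T]) i.+1 + 2) ->
   forall (U : {set T}), #|U| = 2 -> (forall x, x \in wa -> x \notin U) ->
   forall wU : h.-tuple T, is_fh ea (~: U) wU -> wU = wa)
  /\
  ((forall i, i < h ->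
      nth 0 (degseq eb [set: T]) i > nth 0 (degseq eb [set: T]) i.+1 + 2) ->
   forall (U : {set T}), #|U| = 2 -> (forall x, x \in wb -> x \notin U) ->
   forall wU : h.-tuple T, is_fh eb (~: U) wU -> wU = wb).
Proof.
move=> cT _ _ hn Ha Hb.
have hlt : forall U : {set T}, #|U| = 2 -> h < #|T|.
  by move=> U cU; have := max_card U; rewrite cU cT; lia.
split.
  by move=> gap U cU; apply: (mainL (hlt U cU) Ha gap cU).
by move=> gap U cU; apply: (mainL (hlt U cU) Hb gap cU).
Qed.
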